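(* Let $G$ be a connected graph with vertex set $\{u_1,\dots,u_n\}$, $n\ge2$, and let $\mathcal{H}=\{H_1,\dots,H_n\}$ be a family of connected graphs such that each $H_i$ either has radius $r(H_i)\ge4$, or is not a tree and has girth $\mathtt{g}(H_i)\ge7$. Then $$\dim_l(G\circ\mathcal{H})=\sum_{i=1}^n\dim_l(K_1+H_i)=\sum_{i=1}^n\operatorname{adim}_l(H_i).$$
   Context: All graphs are finite and simple. $d_G$ is shortest-path distance, $d_{G,2}=\min\{d_G,2\}$; $s$ distinguishes $x,y$ w.r.t. $d$ if $d(s,x)\ne d(s,y)$. $\dim_l(G)$ (connected $G$): minimum size of $S\subseteq V(G)$ such that any two adjacent vertices are distinguished w.r.t. $d_G$ by some vertex of $S$. $\operatorname{adim}_l(H)$: minimum size of $S\subseteq V(H)$ such that any two adjacent vertices are distinguished w.r.t. $d_{H,2}$ by some vertex of $S$. $K_1+H$: a new vertex joined to every vertex of $H$. Lexicographic product $G\circ\mathcal{H}$: vertex set $\bigcup_i\{u_i\}\times V(H_i)$, $(u_i,v)\sim(u_j,w)$ iff $u_iu_j\in E(G)$, or $i=j$ and $vw\in E(H_i)$. *)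

(* Defs.v *)
From mathcomp Require Import all_boot.
Set Implicit Arguments. Unset Strict Implicit. Unset Printing Implicit Defensive.

Section Graphs.
Variables (T : finType) (e : rel T).

Definition simple_graph := symmetric e /\ irreflexive e.
Definition gconnected := forall x y : T, connect e x y.

Fixpoint ball (k : nat) (x : T) : {set T} :=
  if k is k'.+1 then ball k' x :|: [set y | [exists z in ball k' x, e z y]]
  else [set x].

(* shortest-path distance; (#|T| if unreachable, never used for connected graphs) *)
Definition gdist (x y : T) : nat := find (fun k => y \in ball k x) (iota 0 #|T|).
Definition gdist2 (x y : T) : nat := minn (gdist x y) 2.

Definition local_resolving (d : T -> T -> nat) (S : {set T}) : bool :=
  [forall x, forall y, e x y ==> [exists s in S, d s x != d s y]].

Definition min_local_resolving (d : T -> T -> nat) : nat :=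
  #|[arg min_(S < [set: T] | local_resolving d S) #|S|]|.

Definition local_dim : nat := min_local_resolving gdist.
Definition adj_local_dim : nat := min_local_resolving gdist2.

Definition eccentricity (x : T) : nat := \max_(y : T) gdist x y.
Definition radius : nat := \big[minn/#|T|]_(x : T) eccentricity x.

Definition is_cycle (s : seq T) : bool := [&& uniq s, 3 <= size s & cycle e s].
Definition is_tree : Prop := gconnected /\ forall s, ~~ is_cycle s.
Definition girth_ge (k : nat) : Prop := forall s, is_cycle s -> k <= size s.
End Graphs.

Definition cone_rel (T : finType) (e : rel T) : rel (option T) :=
  fun a b => match a, b with
             | Some x, Some y => e x y
             | None, Some _ | Some _, None => true
             | None, None => false
             end.

(* Lexicographic product G o H, H = (T u, eH u)_{u in V} *)
Definition lex_rel (V : finType) (eG : rel V) (T : V -> finType)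
  (eH : forall u, rel (T u)) : rel {u : V & T u} :=
  fun p q => eG (tag p) (tag q) ||
             ((tag p == tag q) && eH (tag p) (tagged p) (tagged_as p q)).

(* Main.v *)
Require Import Defs.
From mathcomp Require Import all_boot.
From mathcomp Require Import zify.
Set Implicit Arguments. Unset Strict Implicit. Unset Printing Implicit Defensive.


Section GD.
Variables (T : finType) (e : rel T).

Lemma in_ball0 x y : (y \in ball e 0 x) = (y == x).
Proof. by rewrite /= inE. Qed.

Lemma in_ballS k x y :
  (y \in ball e k.+1 x) = (y \in ball e k x) || [exists z in ball e k x, e z y].
Proof. by rewrite /= in_setU in_set. Qed.

Lemma ball_sub k x : ball e k x \subset ball e k.+1 x.
Proof. by rewrite /= subsetUl. Qed.

Lemma ball_mono k k' x : k <= k' -> ball e k x \subset ball e k' x.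
Proof.
move/subnK <-; elim: (k' - k) => [|n IH] //=.
by apply: subset_trans IH (ball_sub _ _).
Qed.

Lemma ball_shift k x z : e x z -> ball e k z \subset ball e k.+1 x.
Proof.
move=> exz; elim: k => [|k IH].
  rewrite sub1set in_ballS; apply/orP; right; apply/existsP; exists x.
  by rewrite in_ball0 eqxx.
apply/subsetP => y; rewrite in_ballS => /orP[h|/existsP[w /andP[hw ewy]]].
  by apply: (subsetP (ball_sub _ _)); apply: (subsetP IH).
rewrite in_ballS; apply/orP; right; apply/existsP; exists w.
by rewrite ewy (subsetP IH).
Qed.

Lemma path_ball x p : path e x p -> last x p \in ball e (size p) x.
Proof.
elim: p x => [|z p IH] x /=; first by rewrite in_ball0.
by case/andP=> exz pz; apply: (subsetP (ball_shift _ exz)); apply: IH.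
Qed.

Lemma ball_connect k x y : y \in ball e k x -> connect e x y.
Proof.
elim: k y => [|k IH] y; first by rewrite in_ball0 => /eqP ->.
rewrite in_ballS => /orP[/IH //|/existsP[z /andP[hz ezy]]].
by apply: connect_trans (IH _ hz) (connect1 ezy).
Qed.

Lemma connect_ball x y : connect e x y -> exists2 k, k < #|T| & y \in ball e k x.
Proof.
case/connectP=> p pth ->; case: (shortenP pth) => p' pth' uq _.
exists (size p'); last exact: path_ball.
have := max_card (mem (x :: p')); rewrite (card_uniqP uq) /=; lia.
Qed.

Lemma gdist_le k x y : y \in ball e k x -> gdist e x y <= k.
Proof.
move=> h; rewrite /gdist; case: (ltnP k #|T|) => hk.
  rewrite leqNgt; apply/negP => hlt; have := before_find 0 hlt.
  by rewrite nth_iota // add0n h.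
by apply: leq_trans (find_size _ _) _; rewrite size_iota.
Qed.

Lemma gdist_ball x y : gdist e x y < #|T| -> y \in ball e (gdist e x y) x.
Proof.
rewrite /gdist => h.
have hh : has (fun k => y \in ball e k x) (iota 0 #|T|) by rewrite has_find size_iota.
by have := nth_find 0 hh; rewrite nth_iota ?add0n.
Qed.

Lemma gdist_lt x y : connect e x y -> gdist e x y < #|T|.
Proof. by case/connect_ball=> k hk /gdist_le h; apply: leq_ltn_trans h hk. Qed.

Lemma gdist_ballk k x y : gdist e x y <= k -> k < #|T| -> y \in ball e k x.
Proof.
move=> h1 h2; apply: (subsetP (ball_mono _ h1)); apply: gdist_ball.
exact: leq_ltn_trans h1 h2.
Qed.

Lemma gdist0 x : gdist e x x = 0.
Proof. by apply/eqP; rewrite -leqn0; apply: gdist_le; rewrite in_ball0. Qed.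

Lemma gdist_eq0 x y : (gdist e x y == 0) = (x == y).
Proof.
apply/idP/idP => [h|/eqP->]; last by rewrite gdist0.
have := @gdist_ballk 0 x y; rewrite (eqP h) in_ball0 eq_sym => -> //.
by apply/card_gt0P; exists x.
Qed.

Lemma card2 (x y : T) : x != y -> 1 < #|T|.
Proof. by move=> h; have := max_card (mem [set x; y]); rewrite cards2 h. Qed.

Lemma gdist_eq1 x y : x != y -> (gdist e x y == 1) = e x y.
Proof.
move=> hxy; apply/idP/idP => [/eqP h|exy].
  have := @gdist_ballk 1 x y; rewrite h leqnn (card2 hxy) in_ballS in_ball0.
  rewrite eq_sym (negbTE hxy) /= => /(_ isT isT) /existsP[z /andP[]].
  by rewrite in_ball0 => /eqP ->.
have h1 : gdist e x y <= 1.
  by apply: gdist_le; rewrite in_ballS; apply/orP; right; apply/existsP; exists x;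
     rewrite in_ball0 eqxx.
have h0 : gdist e x y != 0 by rewrite gdist_eq0.
by rewrite eqn_leq h1 /=; lia.
Qed.

Lemma gdist_ge2 x y : x != y -> ~~ e x y -> 2 <= gdist e x y.
Proof.
move=> hxy nexy; have h0 : gdist e x y != 0 by rewrite gdist_eq0.
have h1 : gdist e x y != 1 by rewrite gdist_eq1.
lia.
Qed.

Lemma gdist_le2 x z y : e x z -> e z y -> gdist e x y <= 2.
Proof.
move=> exz ezy; apply: gdist_le; rewrite in_ballS; apply/orP; right.
apply/existsP; exists z; rewrite ezy andbT in_ballS; apply/orP; right.
by apply/existsP; exists x; rewrite in_ball0 eqxx.
Qed.

Lemma gdist2E x y : gdist2 e x y = if x == y then 0 else if e x y then 1 else 2.
Proof.
rewrite /gdist2; case: eqP => [->|/eqP hxy]; first by rewrite gdist0.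
case: ifP => h; first by rewrite (eqP (etrans (gdist_eq1 hxy) h)).
have := gdist_ge2 hxy (negbT h); lia.
Qed.

Hypothesis hc : forall x y, connect e x y.

Lemma gdist_step v x y : e x y -> gdist e v y <= (gdist e v x).+1.
Proof.
move=> exy; apply: gdist_le; rewrite in_ballS; apply/orP; right.
apply/existsP; exists x; rewrite exy andbT; apply: gdist_ball; exact: gdist_lt.
Qed.

Lemma gdist_parent v x : x != v -> exists2 p, e p x & (gdist e v p).+1 = gdist e v x.
Proof.
move=> hxv; have hx := gdist_ball (gdist_lt (hc v x)).
case E: (gdist e v x) hx => [|m].
  by move/eqP: E; rewrite gdist_eq0 eq_sym (negbTE hxv).
rewrite in_ballS => /orP[/gdist_le|/existsP[p /andP[hp epx]]]; first by lia.
exists p => //; have := gdist_le hp; have := gdist_step v epx; lia.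
Qed.

Lemma gdist_shift v s x : e v s -> gdist e v x <= (gdist e s x).+1.
Proof.
move=> evs; apply: gdist_le; apply: (subsetP (ball_shift _ evs)).
apply: gdist_ball; exact: gdist_lt.
Qed.

End GD.


Lemma seq_max (T : eqType) (f : T -> nat) (s : seq T) :
  s != [::] -> exists2 c, c \in s & forall z, z \in s -> f z <= f c.
Proof.
elim: s => [|a [|b s] IH] // _.
  by exists a => [|z]; rewrite ?inE // => /eqP->.
case: IH => // c cs hc; case: (leqP (f a) (f c)) => h.
  exists c; first by rewrite inE cs orbT.
  by move=> z; rewrite inE => /orP[/eqP->|/hc].
exists a; first by rewrite inE eqxx.
move=> z; rewrite inE => /orP[/eqP->//|/hc]; lia.
Qed.

Section Girth.
Variables (T : finType) (e : rel T).
Hypotheses (hs : symmetric e) (hi : irreflexive e)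
  (hc : forall x y, connect e x y) (hg : girth_ge e 7).

Lemma nshort s : is_cycle e s -> size s < 7 -> False.
Proof. by move=> /hg; lia. Qed.

Lemma cyc3 x0 x1 x2 :
  x0 != x1 -> x0 != x2 -> x1 != x2 ->
  e x0 x1 -> e x1 x2 -> e x2 x0 -> False.
Proof.
move=> nx0x1 nx0x2 nx1x2 ex0x1 ex1x2 ex2x0; apply: (@nshort [:: x0; x1; x2]) => //.
rewrite /is_cycle /= !inE (negbTE nx0x1) (negbTE nx0x2) (negbTE nx1x2) ex0x1 ex1x2 ex2x0.
by [].
Qed.

Lemma cyc4 x0 x1 x2 x3 :
  x0 != x1 -> x0 != x2 -> x0 != x3 -> x1 != x2 -> x1 != x3 -> x2 != x3 ->
  e x0 x1 -> e x1 x2 -> e x2 x3 -> e x3 x0 -> False.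
Proof.
move=> nx0x1 nx0x2 nx0x3 nx1x2 nx1x3 nx2x3 ex0x1 ex1x2 ex2x3 ex3x0; apply: (@nshort [:: x0; x1; x2; x3]) => //.
rewrite /is_cycle /= !inE (negbTE nx0x1) (negbTE nx0x2) (negbTE nx0x3) (negbTE nx1x2) (negbTE nx1x3) (negbTE nx2x3) ex0x1 ex1x2 ex2x3 ex3x0.
by [].
Qed.

Lemma cyc5 x0 x1 x2 x3 x4 :
  x0 != x1 -> x0 != x2 -> x0 != x3 -> x0 != x4 -> x1 != x2 -> x1 != x3 -> x1 != x4 -> x2 != x3 -> x2 != x4 -> x3 != x4 ->
  e x0 x1 -> e x1 x2 -> e x2 x3 -> e x3 x4 -> e x4 x0 -> False.
Proof.
move=> nx0x1 nx0x2 nx0x3 nx0x4 nx1x2 nx1x3 nx1x4 nx2x3 nx2x4 nx3x4 ex0x1 ex1x2 ex2x3 ex3x4 ex4x0; apply: (@nshort [:: x0; x1; x2; x3; x4]) => //.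
rewrite /is_cycle /= !inE (negbTE nx0x1) (negbTE nx0x2) (negbTE nx0x3) (negbTE nx0x4) (negbTE nx1x2) (negbTE nx1x3) (negbTE nx1x4) (negbTE nx2x3) (negbTE nx2x4) (negbTE nx3x4) ex0x1 ex1x2 ex2x3 ex3x4 ex4x0.
by [].
Qed.

Lemma cyc6 x0 x1 x2 x3 x4 x5 :
  x0 != x1 -> x0 != x2 -> x0 != x3 -> x0 != x4 -> x0 != x5 -> x1 != x2 -> x1 != x3 -> x1 != x4 -> x1 != x5 -> x2 != x3 -> x2 != x4 -> x2 != x5 -> x3 != x4 -> x3 != x5 -> x4 != x5 ->
  e x0 x1 -> e x1 x2 -> e x2 x3 -> e x3 x4 -> e x4 x5 -> e x5 x0 -> False.
Proof.
move=> nx0x1 nx0x2 nx0x3 nx0x4 nx0x5 nx1x2 nx1x3 nx1x4 nx1x5 nx2x3 nx2x4 nx2x5 nx3x4 nx3x5 nx4x5 ex0x1 ex1x2 ex2x3 ex3x4 ex4x5 ex5x0; apply: (@nshort [:: x0; x1; x2; x3; x4; x5]) => //.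
rewrite /is_cycle /= !inE (negbTE nx0x1) (negbTE nx0x2) (negbTE nx0x3) (negbTE nx0x4) (negbTE nx0x5) (negbTE nx1x2) (negbTE nx1x3) (negbTE nx1x4) (negbTE nx1x5) (negbTE nx2x3) (negbTE nx2x4) (negbTE nx2x5) (negbTE nx3x4) (negbTE nx3x5) (negbTE nx4x5) ex0x1 ex1x2 ex2x3 ex3x4 ex4x5 ex5x0.
by [].
Qed.


Section Lv.
Variable v : T.
Local Notation D := (gdist e v).

Lemma neqL x y i j : D x = i -> D y = j -> i != j -> x != y.
Proof. by move=> hx hy hij; apply/eqP => E; rewrite E hy in hx; rewrite hx eqxx in hij. Qed.

Ltac nd := match goal with |- is_true (?x != ?y) =>
  match goal with Hx : D x = _ |- _ => match goal with Hy : D y = _ |- _ =>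
     exact (neqL Hx Hy isT) end end end.

Lemma D0 x : D x = 0 -> x = v.
Proof. by move/eqP; rewrite gdist_eq0 => /eqP. Qed.
Lemma Dv : D v = 0. Proof. by rewrite gdist0. Qed.
Lemma L1 x : D x = 1 -> e v x.
Proof.
move=> h; have hvx : v != x by apply/eqP => E; rewrite -E Dv in h.
by rewrite -(gdist_eq1 e hvx) h.
Qed.
Lemma P2 x : D x = 2 -> exists2 p, e p x & D p = 1.
Proof.
move=> h; have hxv : x != v by apply/eqP => E; rewrite E Dv in h.
case: (gdist_parent hc hxv) => p epx hp; exists p => //; move: hp h; lia.
Qed.

Lemma same1 x c : D x = 1 -> D c = 1 -> e x c -> False.
Proof.
move=> hx hc' exc; have hxc : x != c by apply/eqP => E; rewrite E hi in exc.
have evx := L1 hx; have evc := L1 hc'; have hv := Dv.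
by apply: (@cyc3 v x c) => //; try nd; rewrite hs.
Qed.

Lemma same2 x c : D x = 2 -> D c = 2 -> e x c -> False.
Proof.
move=> hx hc' exc; have hxc : x != c by apply/eqP => E; rewrite E hi in exc.
have hv := Dv.
case: (P2 hx) => px epx Dpx; case: (P2 hc') => pc epc Dpc.
have evx := L1 Dpx; have evc := L1 Dpc.
case: (eqVneq px pc) => [E|hp].
  subst pc; apply: (@cyc3 px x c) => //; try nd; by rewrite hs.
apply: (@cyc5 v px x c pc) => //; try nd; by rewrite hs.
Qed.

Lemma sq2 a b c : D a = 1 -> D b = 1 -> D c = 2 -> a != b -> e a c -> e b c -> False.
Proof.
move=> ha hb hc' hab eac ebc; have hv := Dv.
have eva := L1 ha; have evb := L1 hb.
by apply: (@cyc4 v a c b) => //; try nd; rewrite hs.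
Qed.

Lemma sq3 a b c : D a = 2 -> D b = 2 -> D c = 3 -> a != b -> e a c -> e b c -> False.
Proof.
move=> ha hb hc' hab eac ebc; have hv := Dv.
case: (P2 ha) => pa epa Dpa; case: (P2 hb) => pb epb Dpb.
have eva := L1 Dpa; have evb := L1 Dpb.
case: (eqVneq pa pb) => [E|hp].
  subst pb; apply: (@cyc4 pa a c b) => //; try nd; by rewrite hs.
apply: (@cyc6 v pa a c b pb) => //; try nd; by rewrite hs.
Qed.
End Lv.
Lemma key_lvl v x c :
  (forall x y, e x y -> gdist e v x < 3 \/ gdist e v y < 3) ->
  e x c -> gdist e v x <= gdist e v c -> (gdist e v x).+1 = gdist e v c.
Proof.
move=> nf exc hx; have h2 := gdist_step hc v exc.
have nf' := nf _ _ exc.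
case Ex: (gdist e v x) hx h2 nf' => [|[|[|m]]]; case Ec: (gdist e v c) => [|[|[|n]]] //=;
  rewrite ?ltnS ?ltn0 ?leqnn //= => h1 h2 h3; try lia; try (exfalso; lia).
- by move: exc; rewrite (D0 Ex) (D0 Ec) hi.
- by case: (same1 Ex Ec exc).
- by case: (same2 Ex Ec exc).
Qed.

Lemma no_cycle v :
  (forall x y, e x y -> gdist e v x < 3 \/ gdist e v y < 3) ->
  forall s, is_cycle e s -> False.
Proof.
move=> nf s /and3P[uq sz cy].
have st x y : e x y -> gdist e v y <= (gdist e v x).+1 by apply: gdist_step.
have [c cs cmax] := seq_max (gdist e v) (s := s) (ltac:(by move: sz; case: (s))).
case: (rot_to cs) => i s' hrot.
have uq' : uniq (c :: s') by rewrite -hrot rot_uniq.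
have cy' : cycle e (c :: s') by rewrite -hrot rot_cycle.
have sz' : 3 <= size (c :: s') by rewrite -hrot size_rot.
have mem' z : z \in c :: s' -> gdist e v z <= gdist e v c by rewrite -hrot mem_rot => /cmax.
case: s' uq' cy' sz' mem' {hrot} => [|a [|a2 s2]] //= uq' cy' _ mem'.
rewrite rcons_path in cy'; case/and4P: cy' => eca _ _ ebc.
set b := last a2 s2 in ebc.
have hab : a != b.
  apply/eqP => E; move: uq'; rewrite /= !inE E /b.
  by have := mem_last a2 s2; rewrite inE => ->; rewrite /= andbF.
have eac : e a c by rewrite hs.
have Da : gdist e v a <= gdist e v c by apply: mem'; rewrite !inE eqxx orbT.
have Db : gdist e v b <= gdist e v c.
  by apply: mem'; move: (mem_last a2 s2); rewrite /b !inE => /orP[]->; rewrite ?orbT.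
have key x : e x c -> gdist e v x <= gdist e v c -> (gdist e v x).+1 = gdist e v c.
  by move=> *; apply: key_lvl.
have ka := key _ eac Da; have kb := key _ ebc Db; have nfa := nf _ _ eac.
have [da Ea] : exists da, gdist e v a = da by eexists.
have [db Eb] : exists db, gdist e v b = db by eexists.
have [dc Ec] : exists dc, gdist e v c = dc by eexists.
rewrite Ea Eb Ec in ka kb nfa.
case: dc ka kb nfa Ec => [|[|[|[|m]]]] [ka] [kb] nfa Ec; subst da db.
- discriminate ka.
- by move: hab; rewrite (D0 ka) (D0 kb) eqxx.
- exact: (sq2 ka kb Ec hab eac ebc).
- exact: (sq3 ka kb Ec hab eac ebc).
- by rewrite ka in nfa; case: nfa.
Qed.
End Girth.


Lemma bigmin_le (I : eqType) (r : seq I) (F : I -> nat) n i :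
  i \in r -> \big[minn/n]_(j <- r) F j <= F i.
Proof.
elim: r => [|a r IH] //; rewrite inE big_cons => /orP[/eqP->|/IH h].
  exact: geq_minl.
exact: leq_trans (geq_minr _ _) h.
Qed.

Section Far.
Variables (T : finType) (e : rel T).
Hypotheses (hs : symmetric e) (hi : irreflexive e) (hc : forall x y, connect e x y).

Definition far_edge v := exists x y, [/\ e x y, 3 <= gdist e v x & 3 <= gdist e v y].

Lemma far_radius : 4 <= radius e -> forall v, far_edge v.
Proof.
move=> hr v.
have h1 : radius e <= eccentricity e v by apply: bigmin_le; rewrite mem_index_enum.
case: (pickP (fun y => 4 <= gdist e v y)) => [y hy|h0]; last first.
  have : eccentricity e v <= 3.
    by apply/bigmax_leqP => y _; have := h0 y; rewrite /=; lia.
  lia.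
have hyv : y != v by apply/eqP => E; move: hy; rewrite E gdist0.
case: (gdist_parent hc hyv) => p epy hp.
exists p, y; split => //; lia.
Qed.

Lemma far_girth : ~ is_tree e -> girth_ge e 7 -> forall v, far_edge v.
Proof.
move=> nt hg v.
case: (boolP [exists x, exists y, [&& e x y, 3 <= gdist e v x & 3 <= gdist e v y]]).
  by case/existsP=> x /existsP[y /and3P[h1 h2 h3]]; exists x, y.
move=> hn; exfalso; apply: nt; split; first exact: hc.
move=> s; apply/negP => hcy.
apply: (no_cycle hs hi hc hg (v := v)) hcy => x y exy.
case: (ltnP (gdist e v x) 3) => hx; first by left.
case: (ltnP (gdist e v y) 3) => hy; first by right.
by case/negP: hn; apply/existsP; exists x; apply/existsP; exists y; rewrite exy hx hy.
Qed.

Lemma far_all : 4 <= radius e \/ (~ is_tree e /\ girth_ge e 7) -> forall v, far_edge v.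
Proof. by case=> [/far_radius|[/far_girth]]. Qed.

Lemma res_out v S : far_edge v -> local_resolving e (gdist2 e) S ->
  exists2 s, s \in S & ~~ e v s.
Proof.
case=> x [y [exy hx hy]] /forallP/(_ x)/forallP/(_ y)/implyP/(_ exy)/existsP[s /andP[sS hd]].
exists s => //; apply/negP => evs; move: hd.
have h1 := gdist_shift hc x evs; have h2 := gdist_shift hc y evs.
rewrite /gdist2; have -> : minn (gdist e s x) 2 = 2 by lia.
by have -> : minn (gdist e s y) 2 = 2 by lia.
Qed.
End Far.


Lemma gdist_012 (T : finType) (e : rel T) x y : (exists z, e x z && e z y) ->
  gdist e x y = if x == y then 0 else if e x y then 1 else 2.
Proof.
case=> z /andP[h1 h2]; case: eqP => [->|/eqP hxy]; first exact: gdist0.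
case: ifP => h; first exact: (eqP (etrans (gdist_eq1 e hxy) h)).
have := gdist_ge2 hxy (negbT h); have := gdist_le2 h1 h2; lia.
Qed.

Section MLR.
Variables (T : finType) (e : rel T) (d : T -> T -> nat).
Definition mlr_set := [arg min_(S < [set: T] | local_resolving e d S) #|S|].
Hypothesis hT : local_resolving e d setT.

Lemma mlr_setP : local_resolving e d mlr_set /\ #|mlr_set| = min_local_resolving e d.
Proof. by rewrite /mlr_set /min_local_resolving; case: (arg_minnP (fun S : {set T} => #|S|) hT). Qed.

Lemma mlr_le S : local_resolving e d S -> min_local_resolving e d <= #|S|.
Proof. by rewrite /min_local_resolving; case: (arg_minnP (fun S : {set T} => #|S|) hT) => A _ hA /hA. Qed.
End MLR.

Lemma setT_res (T : finType) (e : rel T) d : irreflexive e ->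
  (forall x, d x x = 0) -> (forall x y, x != y -> d x y != 0) -> local_resolving e d setT.
Proof.
move=> hi h0 h1; apply/forallP=> x; apply/forallP=> y; apply/implyP=> exy.
have hxy : x != y by apply/eqP => E; rewrite E hi in exy.
by apply/existsP; exists x; rewrite in_setT h0 eq_sym h1.
Qed.

Lemma setT_res_gdist (T : finType) (e : rel T) : irreflexive e -> local_resolving e (gdist e) setT.
Proof. by move=> hi; apply: setT_res => // [x|x y]; rewrite ?gdist0 ?gdist_eq0. Qed.

Lemma setT_res_gdist2 (T : finType) (e : rel T) : irreflexive e -> local_resolving e (gdist2 e) setT.
Proof. by move=> hi; apply: setT_res => // [x|x y]; rewrite gdist2E ?eqxx // => /negbTE->; case: ifP. Qed.

Section Cone.
Variables (T : finType) (e : rel T).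
Hypotheses (hs : symmetric e) (hi : irreflexive e) (hc : forall x y, connect e x y).
Hypothesis far : forall v, far_edge e v.
Let ce := cone_rel e.

Lemma cone_irr : irreflexive ce. Proof. by case=> //= x; rewrite hi. Qed.

Lemma cone_dist a x : gdist ce (Some a) (Some x) = gdist2 e a x.
Proof. by rewrite gdist2E gdist_012 //; exists None. Qed.

Lemma cone_dist1 a : gdist ce (Some a) None = 1.
Proof. by apply/eqP; rewrite gdist_eq1. Qed.

Lemma cone_dist2 a : gdist ce None (Some a) = 1.
Proof. by apply/eqP; rewrite gdist_eq1. Qed.

Lemma cone_eq : local_dim ce = adj_local_dim e.
Proof.
apply/eqP; rewrite eqn_leq; apply/andP; split.
  have [hS cS] := mlr_setP (setT_res_gdist2 hi).
  set S := mlr_set e (gdist2 e) in hS cS.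
  rewrite /adj_local_dim -cS -(card_imset _ (@Some_inj _)).
  apply: mlr_le; first exact: setT_res_gdist cone_irr.
  apply/forallP => p; apply/forallP => q; apply/implyP.
  case: p => [x|]; case: q => [y|] //= hpq.
  - move/forallP: hS => /(_ x) /forallP /(_ y) /implyP /(_ hpq) /existsP [s /andP[sS hd]].
    by apply/existsP; exists (Some s); rewrite imset_f //= !cone_dist.
  - case: (res_out hc (far x) hS) => s sS nes; apply/existsP; exists (Some s).
    rewrite imset_f //= cone_dist cone_dist1 gdist2E hs (negbTE nes).
    by case: ifP.
  - case: (res_out hc (far y) hS) => s sS nes; apply/existsP; exists (Some s).
    rewrite imset_f //= cone_dist cone_dist1 gdist2E hs (negbTE nes).
    by case: ifP.
have [hS cS] := mlr_setP (setT_res_gdist cone_irr).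
set S := mlr_set ce (gdist ce) in hS cS.
rewrite /local_dim -cS.
set S0 := [set x | Some x \in S].
apply: (@leq_trans #|S0|).
  apply: mlr_le; first exact: setT_res_gdist2.
  apply/forallP => x; apply/forallP => y; apply/implyP => exy.
  move/forallP: hS => /(_ (Some x)) /forallP /(_ (Some y)) /implyP /(_ exy).
  case/existsP => [[a|]] /andP[sS hd]; last by rewrite !cone_dist2 eqxx in hd.
  by apply/existsP; exists a; rewrite inE sS -!cone_dist.
rewrite -(card_imset _ (@Some_inj _)); apply: subset_leq_card.
by apply/subsetP => p /imsetP[x]; rewrite inE => h ->.
Qed.
End Cone.


Lemma card_sigma_set (V : finType) (T : V -> finType) (S : {set {u : V & T u}}) :
  #|S| = \sum_(u : V) #|[set x : T u | Tagged T x \in S]|.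
Proof.
rewrite -sum1_card (partition_big (fun p => tag p) xpredT) //=.
apply: eq_bigr => u _.
transitivity #|[set p in S | tag p == u]|.
  by rewrite -sum1_card; apply: eq_bigl => p; rewrite !inE.
rewrite -(card_imset _ (@eq_from_Tagged _ T u)).
apply: eq_card => p; rewrite inE /=; apply/idP/imsetP.
  case: p => w z /= /andP[hz /eqP Ew]; subst w; exists z => //; by rewrite inE.
case=> x; rewrite inE => hx ->.
by rewrite hx eqxx.
Qed.

Section Lex.
Unset Implicit Arguments.
Variables (V : finType) (eG : rel V) (T : V -> finType) (eH : forall u, rel (T u)).
Hypotheses (hsG : symmetric eG) (hiG : irreflexive eG) (hcG : forall x y, connect eG x y)
  (hV : 2 <= #|V|).
Hypotheses (hsH : forall u : V, symmetric (eH u)) (hiH : forall u : V, irreflexive (eH u))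
  (hcH : forall (u : V) x y, connect (eH u) x y) (far : forall (u : V) v, far_edge (eH u) v).
Variable inh : forall u, T u.
Set Implicit Arguments.

Let L := {u : V & T u}.
Let le := lex_rel eG eH.

Lemma lex_same u (x y : T u) : le (Tagged T x) (Tagged T y) = eH u x y.
Proof. by rewrite /le /lex_rel /= hiG eqxx tagged_asE. Qed.

Lemma lex_irr : irreflexive le.
Proof. by case=> u x; rewrite lex_same hiH. Qed.

Lemma nbG u : exists w, eG u w.
Proof.
have : 0 < #|[set~ u]| by rewrite cardsC1; lia.
case/card_gt0P => u2; rewrite !inE => hu2.
case/connectP: (hcG u u2) => [[|w p]] /=; first by move=> _ E; rewrite E eqxx in hu2.
by case/andP=> h _ _; exists w.
Qed.

Lemma lex_in_dist u (x y : T u) : gdist le (Tagged T x) (Tagged T y) = gdist2 (eH u) x y.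
Proof.
rewrite gdist2E gdist_012 ?lex_same ?eq_Tagged //=.
case: (nbG u) => w euw; exists (Tagged T (inh w)).
by rewrite /le /lex_rel /= euw hsG euw.
Qed.

Lemma proj_ball k (p q : L) : q \in ball le k p -> tag q \in ball eG k (tag p).
Proof.
elim: k q => [|k IH] q; first by rewrite !in_ball0 => /eqP->.
rewrite !in_ballS => /orP[/IH->//|/existsP[r /andP[hr erq]]].
apply/orP; move: erq; rewrite /le /lex_rel => /orP[h|/andP[/eqP <- _]].
  by right; apply/existsP; exists (tag r); rewrite h IH.
by left; apply: IH.
Qed.

Lemma lift_ball k u (x : T u) u' : u' \in ball eG k u -> u' != u ->
  forall y : T u', (Tagged T y : L) \in ball le k (Tagged T x).
Proof.
elim: k u' => [|k IH] u'; first by rewrite in_ball0 => ->.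
rewrite in_ballS => /orP[h hne y|/existsP[z /andP[hz ezu']] hne y].
  by apply: (subsetP (ball_sub _ _ _)); apply: IH.
rewrite in_ballS; apply/orP; right; apply/existsP.
case: (eqVneq z u) => [Ez|hzu].
  subst z; exists (Tagged T x); rewrite /le /lex_rel /= ezu' andbT.
  by apply: (subsetP (ball_mono _ _ (leq0n k))); rewrite in_ball0.
by exists (Tagged T (inh z)); rewrite IH //= /le /lex_rel /= ezu'.
Qed.

Lemma lex_out_dist u u' (x : T u) (y : T u') : u != u' ->
  gdist le (Tagged T x) (Tagged T y) = gdist eG u u'.
Proof.
move=> huu; set n := gdist eG u u'.
have hn : u' \in ball eG n u by apply: gdist_ball; apply: gdist_lt.
have h1 : gdist le (Tagged T x) (Tagged T y) <= n.
  by apply: gdist_le; apply: lift_ball => //; rewrite eq_sym.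
have hc : connect le (Tagged T x) (Tagged T y).
  by apply: (ball_connect (k := n)); apply: lift_ball => //; rewrite eq_sym.
have := proj_ball (gdist_ball (gdist_lt hc)) => /= /gdist_le; lia.
Qed.

Lemma lex_eq : local_dim le = \sum_(u : V) adj_local_dim (eH u).
Proof.
apply/eqP; rewrite eqn_leq; apply/andP; split.
  pose Su (u : V) := mlr_set (eH u) (gdist2 (eH u)).
  have hS (u : V) := mlr_setP (setT_res_gdist2 (hiH u)).
  pose S := [set p : L | tagged p \in Su (tag p)].
  have ->: \sum_u adj_local_dim (eH u) = #|S|.
    rewrite card_sigma_set; apply: eq_bigr => u _; rewrite /adj_local_dim -(proj2 (hS u)).
    by apply: eq_card => x; rewrite !inE.
  apply: mlr_le; first exact: setT_res_gdist lex_irr.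
  apply/forallP => -[u x]; apply/forallP => -[u' y]; apply/implyP.
  rewrite /le /lex_rel /= => /orP[euu|/andP[/eqP Eu]].
    case: (res_out (hcH u) (far u x) (proj1 (hS u))) => z zS nez.
    apply/existsP; exists (Tagged T z); rewrite inE zS /=.
    have huu : u != u' by apply/eqP => E; rewrite E hiG in euu.
    rewrite lex_in_dist lex_out_dist // gdist2E (hsH u) (negbTE nez).
    rewrite (eqP (_ : gdist eG u u' == 1)); first by case: ifP.
    by rewrite gdist_eq1.
  subst u'; rewrite tagged_asE => exy.
  move: (proj1 (hS u)) => /forallP /(_ x) /forallP /(_ y) /implyP /(_ exy).
  case/existsP=> z /andP[zS hd]; apply/existsP; exists (Tagged T z).
  by rewrite inE zS /= !lex_in_dist.
have [hS cS] := mlr_setP (setT_res_gdist lex_irr).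
set S := mlr_set le (gdist le) in hS cS.
rewrite /local_dim -cS card_sigma_set; apply: leq_sum => u _.
apply: mlr_le; first exact: setT_res_gdist2.
apply/forallP => x; apply/forallP => y; apply/implyP => exy.
move/forallP: hS => /(_ (Tagged T x)) /forallP /(_ (Tagged T y)) /implyP.
rewrite lex_same => /(_ exy) /existsP [[w z] /andP[sS hd]].
case: (eqVneq u w) => [Ew|huw].
  subst w; apply/existsP; exists z; rewrite inE sS.
  by rewrite -!lex_in_dist.
by rewrite !lex_out_dist 1?eq_sym // eqxx in hd.
Qed.
End Lex.


Lemma radius_le (T : finType) (e : rel T) : radius e <= #|T|.
Proof.
rewrite /radius; apply: (big_rec (fun x => x <= #|T|)) => // i x _ h.
exact: leq_trans (geq_minr _ _) h.
Qed.

Unset Implicit Arguments. Set Strict Implicit.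

Theorem corollary5 (V : finType) (eG : rel V) (T : V -> finType)
  (eH : forall u, rel (T u)) :
  simple_graph eG -> gconnected eG -> 2 <= #|V| ->
  (forall u, simple_graph (eH u)) ->
  (forall u, gconnected (eH u)) ->
  (forall u, 4 <= radius (eH u) \/ (~ is_tree (eH u) /\ girth_ge (eH u) 7)) ->
  local_dim (@lex_rel V eG T eH) = \sum_(u : V) local_dim (cone_rel (eH u)) /\
  \sum_(u : V) local_dim (cone_rel (eH u)) = \sum_(u : V) adj_local_dim (eH u).
Proof.
move=> [hsG hiG] hcG hV hsimp hcH hrad.
have hsH u := proj1 (hsimp u); have hiH u := proj2 (hsimp u).
have far u := far_all (hsH u) (hiH u) (hcH u) (hrad u).
have inh u : T u.
  case: (pickP (@predT (T u))) => [x _|h0]; first exact: x.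
  exfalso; have c0 : #|T u| = 0 by apply: eq_card0 => x; have := h0 x.
  case: (hrad u) => [|[nt _]].
    by have := @radius_le _ (eH u); rewrite c0; case: (radius (eH u)).
  apply: nt; split; first exact: hcH.
  by case=> [|x s] //; have := h0 x.
have h2 : \sum_(u : V) local_dim (cone_rel (eH u)) = \sum_(u : V) adj_local_dim (eH u).
  by apply: eq_bigr => u _; apply: cone_eq; [exact: hsH|exact: hiH|exact: hcH|exact: far].
split => //; rewrite h2.
exact: lex_eq.
Qed.
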